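(* Let $k\ge0$ be an integer and $a,b,c,d\in\mathbb{C}$ generic (no lower parameter a nonpositive integer). Define the polynomial of degree $2k$ in $n$ $$Q_k^{(2)}(n;a;b,c,d)={}_4F_3\!\left[\begin{matrix}-n,\ n+a,\ -k,\ k-1-a+b+c+d\\ b,\ c,\ d\end{matrix}\,\Big|\,1\right]=\sum_{j=0}^k\frac{(-n)_j(n+a)_j(-k)_j(k-1-a+b+c+d)_j}{j!\,(b)_j(c)_j(d)_j}.$$ Then, near $x=0$, $${}_4F_3\!\left[\begin{matrix}\tfrac a2,\ \tfrac12+\tfrac a2,\ 1-k+a-b-c,\ k+d\\ 1+a-b,\ 1+a-c,\ d\end{matrix}\,\Big|\,-\frac{4x}{(1-x)^2}\right]=(1-x)^a\sum_{n=0}^\infty\frac{(a)_n(b)_n(c)_n}{n!\,(1+a-b)_n(1+a-c)_n}\,Q_k^{(2)}(n;a;b,c,d)\,x^n.$$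
   Context: $(c)_n$ denotes the Pochhammer symbol, $(c)_0=1$; ${}_pF_q$ is the generalized hypergeometric series $\sum_n\frac{\prod(a_i)_n}{n!\prod(b_i)_n}x^n$. *)

(* Defs.v *)
(* Formal power series are represented by coefficient
   functions nat -> R. *)
From HB Require Import structures.
From mathcomp Require Import all_boot all_order all_algebra.
Set Implicit Arguments. Unset Strict Implicit. Unset Printing Implicit Defensive.
Import Order.TTheory GRing.Theory Num.Theory.
Local Open Scope ring_scope.

Section Defs.
Variable R : fieldType.

Definition poch (c : R) (n : nat) : R := \prod_(i < n) (c + i%:R).

Definition hypcoef (as_ bs : seq R) (n : nat) : R :=
  (\prod_(a <- as_) poch a n) / (n`!%:R * \prod_(b <- bs) poch b n).

Definition fps_one : nat -> R := fun n => (n == 0%N)%:R.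
Definition fps_X : nat -> R := fun n => (n == 1%N)%:R.
Definition fps_mul (f g : nat -> R) : nat -> R :=
  fun n => \sum_(i < n.+1) f i * g (n - i)%N.
Definition fps_pow (g : nat -> R) (m : nat) : nat -> R := iter m (fps_mul g) fps_one.
(* composition f(g(x)), meaningful when g 0 = 0 *)
Definition fps_comp (f g : nat -> R) : nat -> R :=
  fun n => \sum_(m < n.+1) f m * fps_pow g m n.
(* binomial series (1 - x)^a = sum_n (-a)_n / n! x^n *)
Definition binom_series (a : R) : nat -> R := fun n => poch (- a) n / n`!%:R.

Definition Q2 (k n : nat) (a b c d : R) : R :=
  \sum_(j < k.+1)
    (poch (- n%:R) j * poch (n%:R + a) j * poch (- k%:R) j
       * poch (k%:R - 1 - a + b + c + d) j)
    / (j`!%:R * poch b j * poch c j * poch d j).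
End Defs.

(* Main.v *)
Require Import Defs.
From HB Require Import structures.
From mathcomp Require Import all_boot all_order all_algebra.
Import Order.TTheory GRing.Theory Num.Theory.
Local Open Scope ring_scope.
From mathcomp Require Import ring zify.


Section Poch.
Variable R : fieldType.
Implicit Types x y z : R.

Lemma natrS n : (n.+1)%:R = n%:R + 1 :> R.
Proof. by rewrite -natr1. Qed.

Lemma poch0 x : poch x 0 = 1.
Proof. by rewrite /poch big_ord0. Qed.

Lemma pochS x n : poch x n.+1 = poch x n * (x + n%:R).
Proof. by rewrite /poch big_ord_recr. Qed.

Lemma pochD x m n : poch x (m + n) = poch x m * poch (x + m%:R) n.
Proof.
elim: n => [|n IH]; first by rewrite addn0 poch0 mulr1.
by rewrite addnS !pochS IH natrD addrA mulrA.
Qed.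

Lemma poch1 x : poch x 1 = x.
Proof. by rewrite pochS poch0 mul1r addr0. Qed.

Lemma pochSl x n : poch x n.+1 = x * poch (x + 1) n.
Proof. by rewrite -add1n pochD poch1. Qed.

Lemma poch_refl z w l : w = 1 - z - l%:R -> poch w l = (-1) ^+ l * poch z l.
Proof.
elim: l z w => [|l IH] z w ->; first by rewrite !poch0 expr0 mulr1.
rewrite pochSl (IH z) ?pochS ?exprS; last by rewrite natrS; ring.
rewrite natrS; ring.
Qed.

Lemma poch_negz n j : (n < j)%N -> poch (- n%:R : R) j = 0.
Proof.
move=> /subnKC <-; by rewrite pochD pochS addNr mulr0 mul0r.
Qed.

Lemma poch_fact l m : poch (l.+1)%:R m * (l`!)%:R = ((l + m)`!)%:R :> R.
Proof.
elim: m => [|m IH]; first by rewrite poch0 mul1r addn0.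
rewrite pochS -mulrA (mulrC _ (l`!)%:R) mulrA IH addnS factS natrM.
by rewrite -natrD addSn mulrC.
Qed.

Definition vt x y n j := ('C(n, j))%:R * poch x j * poch y (n - j).

Lemma vander x y n : \sum_(j < n.+1) vt x y n j = poch (x + y) n.
Proof.
elim: n => [|n IH]; first by rewrite big_ord1 /vt bin0 !poch0 !mulr1.
pose g j := if j is i.+1 then - ('C(n, i))%:R * poch x j * poch y (n.+1 - j) else 0.
have H : \sum_(j < n.+2) (vt x y n.+1 j - (x + y + n%:R) * vt x y n j) = g n.+2 - g 0.
  rewrite -(big_mkord xpredT (fun j => vt x y n.+1 j - (x + y + n%:R) * vt x y n j)).
  apply: telescope_sumr_eq => // j /andP[_ hj].
  rewrite /g /vt; case: j hj => [|i] hi.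
    rewrite bin0 bin0 subn0 subn0 !poch0 pochS poch1 subSS subn0; ring.
  have [->|hin] := eqVneq i n.
    rewrite !binn (bin_small (ltnSn n)) subnn; ring.
  have hi' : (i < n)%N by rewrite ltn_neqAle hin -ltnS.
  have [r ->] : exists r, n = (i.+1 + r)%N by exists (n - i.+1)%N; rewrite subnKC.
  have e1 : ((i.+1 + r).+1 - i.+1 = r.+1)%N by rewrite -addnS addKn.
  have e2 : ((i.+1 + r).+1 - i.+2 = r)%N by rewrite subSS addKn.
  have e3 : ((i.+1 + r) - i.+1 = r)%N by rewrite addKn.
  rewrite e1 e2 e3 binS natrD [poch x i.+2]pochS [poch y r.+1]pochS !natrD !natrS.
  ring.
have E : \sum_(j < n.+2) vt x y n j = \sum_(j < n.+1) vt x y n j.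
  by rewrite big_ord_recr /= /vt bin_small // !mul0r addr0.
move: H; rewrite sumrB -mulr_sumr E IH /g /= bin_small // oppr0 !mul0r addr0.
by move/eqP; rewrite subr_eq0 => /eqP ->; rewrite pochS mulrC.
Qed.


Definition st (A B C : R) m j :=
  ('C(m, j))%:R * poch A j * poch B j * poch (C + j%:R) (m - j) * poch (C - A - B) (m - j).

Lemma saal A B C m : \sum_(j < m.+1) st A B C m j = poch (C - A) m * poch (C - B) m.
Proof.
elim: m => [|m IH]; first by rewrite big_ord1 /st bin0 !poch0 !mulr1.
set D := C - A - B.
pose g j := if j is i.+1 then - ('C(m, i))%:R * poch A j * poch B j
   * poch (C + i%:R) (m - i) * poch D (m - i) else 0.
pose X := (C - A + m%:R) * (C - B + m%:R).
have H : \sum_(j < m.+2) (st A B C m.+1 j - X * st A B C m j) = g m.+2 - g 0.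
  rewrite -(big_mkord xpredT (fun j => st A B C m.+1 j - X * st A B C m j)).
  apply: telescope_sumr_eq => // j /andP[_ hj].
  rewrite /g /st /X -/D; case: j hj => [|i] hi.
    rewrite !bin0 !subn0 !poch1 !poch0 addr0 [poch C m.+1]pochS [poch D m.+1]pochS /D; ring.
  have [->|hin] := eqVneq i m.
    rewrite !binn (bin_small (ltnSn m)) !subnn !poch0; ring.
  have hi' : (i < m)%N by rewrite ltn_neqAle hin -ltnS.
  have [r ->] : exists r, m = (i.+1 + r)%N by exists (m - i.+1)%N; rewrite subnKC.
  have e1 : ((i.+1 + r).+1 - i.+1 = r.+1)%N by rewrite -addnS addKn.
  have e2 : ((i.+1 + r) - i.+1 = r)%N by rewrite addKn.
  have e4 : ((i.+1 + r) - i = r.+1)%N by rewrite addSn subSn ?leq_addr // addKn.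
  have key : ((r.+1)%:R * ('C(i.+1 + r, i))%:R = (i.+1)%:R * ('C(i.+1 + r, i.+1))%:R :> R).
    by rewrite -!natrM mul_bin_left e4.
  rewrite e1 e2 e4 binS [poch A i.+2]pochS [poch B i.+2]pochS.
  rewrite [poch (C + i%:R) r.+1]pochSl (_ : C + i%:R + 1 = C + (i.+1)%:R); last by rewrite natrS addrA.
  rewrite [poch (C + _) r.+1]pochS [poch D r.+1]pochS.
  apply/eqP; rewrite -subr_eq0; apply/eqP.
  set K := poch A i.+1 * poch B i.+1 * poch (C + (i.+1)%:R) r * poch D r.
  transitivity (K * (D + r%:R) * ((r.+1)%:R * ('C(i.+1 + r, i))%:R
     - (i.+1)%:R * ('C(i.+1 + r, i.+1))%:R)).
    rewrite /K /D !natrD !natrS; ring.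
  by rewrite key subrr mulr0.
have E : \sum_(j < m.+2) st A B C m j = \sum_(j < m.+1) st A B C m j.
  by rewrite big_ord_recr /= /st bin_small // !mul0r addr0.
move: H; rewrite sumrB -mulr_sumr E IH /g /= bin_small // oppr0 !mul0r addr0.
move/eqP; rewrite subr_eq0 => /eqP ->; rewrite /X !pochS; ring.
Qed.

End Poch.

Section Num.
Variable R : numFieldType.
Implicit Types x y z : R.

Lemma fact_neq0 n : (n`!)%:R != 0 :> R.
Proof. by rewrite pnatr_eq0 -lt0n fact_gt0. Qed.

Lemma poch_neq0 x n : (forall m : nat, x != - m%:R) -> poch x n != 0.
Proof. by move=> H; apply/prodf_neq0 => i _; rewrite addr_eq0 H. Qed.

Lemma vander_n x y s :
  \sum_(i < s.+1) (poch x i / (i`!)%:R * (poch y (s - i) / ((s - i)`!)%:R))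
  = poch (x + y) s / (s`!)%:R.
Proof.
rewrite -vander mulr_suml; apply: eq_bigr => i _.
have hi : (i <= s)%N by rewrite -ltnS.
rewrite /vt -(bin_fact hi) !natrM.
have h1 := fact_neq0 i; have h2 := fact_neq0 (s - i).
have h3 : ('C(s, i))%:R != 0 :> R by rewrite pnatr_eq0 -lt0n bin_gt0.
by field; rewrite ?h1 ?h2 ?h3 ?mulf_neq0.
Qed.

Lemma sum_trunc (F : nat -> R) n p : (n <= p)%N ->
  (forall i, (n <= i)%N -> (i < p)%N -> F i = 0) ->
  \sum_(i < p) F i = \sum_(i < n) F i.
Proof.
move=> hnp hF.
rewrite -(big_mkord xpredT F) -(big_mkord xpredT F) (big_cat_nat (leq0n n) hnp) /=.
rewrite [X in _ + X]big_nat_cond [X in _ + X]big1 ?addr0 // => i /andP[/andP[h1 h2] _].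
exact: hF.
Qed.

Lemma tri_swap (F : nat -> nat -> R) N :
  \sum_(n < N.+1) \sum_(m < n.+1) F n m
  = \sum_(m < N.+1) \sum_(l < (N - m).+1) F (m + l)%N m.
Proof.
transitivity (\sum_(n < N.+1) \sum_(m < N.+1) (if (m <= n)%N then F n m else 0)).
  apply: eq_bigr => n _.
  rewrite (@sum_trunc (fun m => if (m <= n)%N then F n m else 0) n.+1) //.
  - by apply: eq_bigr => m _; rewrite -ltnS ltn_ord.
  - by move=> i hi _; rewrite leqNgt hi.
rewrite exchange_big /=; apply: eq_bigr => m _.
have hm : (m <= N.+1)%N by apply: ltnW.
rewrite -(big_mkord xpredT (fun n => if (m <= n)%N then F n m else 0)).
rewrite (big_cat_nat (leq0n m) hm) /=.
rewrite [X in X + _]big_nat_cond big1 ?add0r; last first.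
  by move=> i /andP[/andP[_ h] _]; rewrite leqNgt h.
rewrite -{1}(add0n m) big_addn -(subSn (ltnSE (ltn_ord m))) big_mkord.
by apply: eq_bigr => l _; rewrite leq_addl addnC.
Qed.

Lemma negpoch m l :
  poch (- (m + l)%:R : R) m / ((m + l)`!)%:R = (-1) ^+ m / (l`!)%:R.
Proof.
rewrite (@poch_refl _ ((l.+1)%:R : R)); last by rewrite natrD natrS; ring.
rewrite addnC -(poch_fact _ l m).
have h : poch (l.+1)%:R m * (l`!)%:R != 0 :> R by rewrite poch_fact fact_neq0.
have h1 : poch (l.+1)%:R m != 0 :> R by move: h; rewrite mulf_eq0 negb_or => /andP[].
have h2 := fact_neq0 l.
by field; rewrite ?h1 ?h2.
Qed.

Lemma four x m :
  poch (x / 2%:R) m * poch (2%:R^-1 + x / 2%:R) m * 4%:R ^+ m = poch x (2 * m).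
Proof.
have h2 : 2%:R != 0 :> R by rewrite pnatr_eq0.
elim: m => [|m IH]; first by rewrite !poch0 !mulr1.
rewrite mulnS !pochS -IH exprS natrM natrS.
by field.
Qed.

End Num.

Section Pow.
Variable R : numFieldType.

Lemma fps_mulX (h : nat -> R) n :
  fps_mul (@fps_X R) h n = if n is n'.+1 then h n' else 0.
Proof.
case: n => [|n]; first by rewrite /fps_mul big_ord1 /fps_X /= mul0r.
rewrite /fps_mul big_ord_recl big_ord_recl /= big1 ?addr0.
  by rewrite /fps_X /= mul0r mul1r add0r subn1.
by move=> i _; rewrite /fps_X /= mul0r.
Qed.

Definition Gs : nat -> R := fun n => - 4%:R * fps_mul (@fps_X R) (binom_series (- 2%:R)) n.

Lemma powG (m N : nat) : fps_pow Gs m N =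
  if (m <= N)%N then (- 4%:R) ^+ m * (poch (2 * m)%:R (N - m) / ((N - m)`!)%:R) else 0.
Proof.
elim: m N => [|m IH] N.
  rewrite /fps_pow /= /fps_one expr0 mul1r muln0 subn0.
  case: N => [|N]; first by rewrite poch0 divr1.
  by rewrite pochSl mul0r mul0r.
rewrite /fps_pow iterS -/(fps_pow Gs m) /fps_mul.
case: N => [|N]; first by rewrite big_ord1 /Gs fps_mulX mulr0 mul0r.
rewrite big_ord_recl /= {1}/Gs fps_mulX mulr0 mul0r add0r ltnS.
under eq_bigr => i _ do rewrite subSS IH /Gs fps_mulX /binom_series opprK.
case: leqP => hmN; last first.
  rewrite big1 // => i _.
  have -> : (m <= N - i)%N = false.
    by apply/negbTE; rewrite -ltnNge (leq_ltn_trans (leq_subr _ _) hmN).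
  by rewrite mulr0.
have [s ->] : exists s, N = (m + s)%N by exists (N - m)%N; rewrite subnKC.
pose F := fun i : nat => - 4%:R * (poch 2%:R i / (i`!)%:R) *
     (if (m <= m + s - i)%N then (- 4%:R) ^+ m *
       (poch (R:=R) (2 * m)%:R (m + s - i - m) / ((m + s - i - m)`!)%:R) else 0).
transitivity (\sum_(i < (m + s).+1) F i).
  by apply: eq_bigr => i _; rewrite /F /bump leq0n add1n.
rewrite (@sum_trunc _ F s.+1 (m + s).+1) /F; last 2 first.
- by rewrite ltnS leq_addl.
- move=> i hi hp /=; have -> : (m <= m + s - i)%N = false by apply/negbTE; rewrite -ltnNge; lia.
  by rewrite mulr0.
under eq_bigr => i _.
  have hi : (i <= s)%N by rewrite -ltnS.
  rewrite (_ : (m <= m + s - i)%N = true); last by rewrite -addnBA // leq_addr.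
  rewrite (_ : (m + s - i - m = s - i)%N); last by rewrite -addnBA // addKn.
  over.
rewrite /=.
transitivity ((- 4%:R : R) ^+ m.+1 * \sum_(i < s.+1)
   (poch 2%:R i / (i`!)%:R * (poch (2 * m)%:R (s - i) / ((s - i)`!)%:R))).
  by rewrite mulr_sumr; apply: eq_bigr => i _; rewrite exprS; ring.
rewrite vander_n subSS addKn -natrD.
by rewrite mulnS.
Qed.

End Pow.

Section Saal.
Variable R : numFieldType.

Lemma prod_neq0 (x y : R) : x * y != 0 -> x != 0 /\ y != 0.
Proof. by rewrite mulf_eq0 negb_or => /andP[]. Qed.

Lemma saal_div (A B C E y u v Mn : R) (M : nat) :
  Mn = - M%:R -> y = C - A - B -> E = 1 - y - M%:R -> u = C - A -> v = C - B ->
  poch C M != 0 -> poch y M != 0 ->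
  \sum_(l < M.+1) (poch Mn l * poch A l * poch B l / ((l`!)%:R * poch C l * poch E l))
   = poch u M * poch v M / (poch C M * poch y M).
Proof.
move=> hMn hy hE hu hv hC hyM.
rewrite hu hv -saal mulr_suml; apply: eq_bigr => -[l hl] _ /=.
have [r hr] : exists r, M = (l + r)%N by exists (M - l)%N; rewrite subnKC // -ltnS.
subst M.
rewrite /st addKn -hy.
rewrite (@poch_refl _ ((r.+1)%:R : R) Mn); last by rewrite hMn natrD natrS; ring.
rewrite (@poch_refl _ (y + r%:R) E); last by rewrite hE natrD; ring.
move: hC; rewrite pochD => hC.
move: hyM; rewrite (addnC l r) pochD => hyM.
have [hC1 hC2] := prod_neq0 _ _ hC.
have [hy1 hy2] := prod_neq0 _ _ hyM.
have hb : poch (r.+1)%:R l = ('C(r + l, l))%:R * (l`!)%:R :> R.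
  have hr := fact_neq0 R r.
  apply: (mulIf hr); rewrite poch_fact -(bin_fact (leq_addl r l)) addnK !natrM.
  by rewrite mulrA.
rewrite hb.
have hl1 := fact_neq0 R l.
have hs : (-1) ^+ l != 0 :> R by rewrite expf_neq0 // oppr_eq0 oner_eq0.
field.
by rewrite hl1 hC1 hC2 hy1 hy2 hs.
Qed.

End Saal.

Section Whip.
Variable R : numFieldType.
Variables (a b c d : R) (k : nat).

Definition Xw n m := poch (- n%:R) m * poch (n%:R + a) m /
  ((m`!)%:R * (poch (1 + a - b) m * poch (1 + a - c) m * poch d m)).
Definition Tw n j := poch (- n%:R) j * poch (n%:R + a) j * poch (- k%:R) j
  * poch (k%:R - 1 - a + b + c + d) j / ((j`!)%:R * poch b j * poch c j * poch d j).
Definition Fw n := poch b n * poch c n / (poch (1 + a - b) n * poch (1 + a - c) n).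
Definition alpha := k%:R - 1 - a + b + c + d.

Lemma whip_j (hb : forall m : nat, b != - m%:R)
  (hc : forall m : nat, c != - m%:R)
  (hd : forall m : nat, d != - m%:R)
  (hab : forall m : nat, 1 + a - b != - m%:R)
  (hac : forall m : nat, 1 + a - c != - m%:R) j r :
  \sum_(l < r.+1) Xw (j + r) (j + l) * st R alpha (- k%:R) d (j + l) j
  = Tw (j + r) j * Fw (j + r).
Proof.
set n := (j + r)%N.
set B := d - alpha - - k%:R.
pose Y := poch alpha j * poch (- k%:R) j * poch (- n%:R) j * poch (n%:R + a) j /
   ((j`!)%:R * poch d j * poch (1 + a - b) j * poch (1 + a - c) j).
pose Z l := poch (- n%:R + j%:R) l * poch (n%:R + a + j%:R) l * poch B l /
   ((l`!)%:R * poch (1 + a - b + j%:R) l * poch (1 + a - c + j%:R) l).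
have hjl : forall l, Xw n (j + l) * st R alpha (- k%:R) d (j + l) j = Y * Z l.
  move=> l; rewrite /Xw /st addKn /Y /Z -/B.
  have hg := @poch_neq0 R _ (j + l) hab.
  have hh := @poch_neq0 R _ (j + l) hac.
  have hdd := @poch_neq0 R _ (j + l) hd.
  rewrite !pochD in hg hh hdd *.
  have [hg1 hg2] := prod_neq0 R _ _ hg.
  have [hh1 hh2] := prod_neq0 R _ _ hh.
  have [hd1 hd2] := prod_neq0 R _ _ hdd.
  rewrite -(bin_fact (leq_addr l j)) addKn !natrM.
  have hC : ('C(j + l, j))%:R != 0 :> R by rewrite pnatr_eq0 -lt0n bin_gt0 leq_addr.
  have hj := fact_neq0 R j; have hl := fact_neq0 R l.
  field.
  by rewrite hC hj hl hg1 hg2 hh1 hh2 hd1 hd2.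
under eq_bigr => l _ do rewrite hjl.
rewrite -mulr_sumr /Z.
have hg := @poch_neq0 R _ n hab.
have hh := @poch_neq0 R _ n hac.
have hbb := @poch_neq0 R _ n hb.
have hcc := @poch_neq0 R _ n hc.
have hdj := @poch_neq0 R _ j hd.
rewrite /n !pochD in hg hh hbb hcc.
have [hg1 hg2] := prod_neq0 R _ _ hg.
have [hh1 hh2] := prod_neq0 R _ _ hh.
have [hb1 hb2] := prod_neq0 R _ _ hbb.
have [hc1 hc2] := prod_neq0 R _ _ hcc.
have hyr : poch (c - a - n%:R) r = (-1) ^+ r * poch (1 + a - c + j%:R) r.
  by apply: poch_refl; rewrite /n natrD; ring.
have hs : (-1) ^+ r != 0 :> R by rewrite expf_neq0 // oppr_eq0 oner_eq0.
rewrite (@saal_div R (n%:R + a + j%:R) B (1 + a - b + j%:R) (1 + a - c + j%:R)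
  (c - a - n%:R) (1 - b - n%:R) (c + j%:R) (- n%:R + j%:R) r); first last.
- by rewrite hyr mulf_neq0.
- by [].
- by rewrite /B /alpha; ring.
- by rewrite /n natrD; ring.
- by rewrite /n natrD; ring.
- by rewrite /B /alpha /n natrD; ring.
- by rewrite /n natrD; ring.
rewrite hyr (@poch_refl R (b + j%:R) (1 - b - n%:R) r); last by rewrite /n natrD; ring.
rewrite /Y /Tw /Fw /n !pochD.
have hj := fact_neq0 R j.
field.
by rewrite hj hdj hg1 hg2 hh1 hh2 hb1 hc1 hs.
Qed.


Lemma whipple (hb : forall m : nat, b != - m%:R)
  (hc : forall m : nat, c != - m%:R)
  (hd : forall m : nat, d != - m%:R)
  (hab : forall m : nat, 1 + a - b != - m%:R)
  (hac : forall m : nat, 1 + a - c != - m%:R) n :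
  Fw n * Q2 k n a b c d =
  \sum_(m < n.+1) Xw n m * (poch (1 - k%:R + a - b - c) m * poch (k%:R + d) m).
Proof.
pose G j := Fw n * Tw n j.
transitivity (\sum_(j < k.+1) G j).
  by rewrite /Q2 mulr_sumr.
transitivity (\sum_(j < (n + k).+1) G j).
  symmetry; apply: sum_trunc; first by rewrite ltnS leq_addl.
  by move=> i hi _; rewrite /G /Tw (poch_negz _ _ _ hi) !mulr0 !mul0r mulr0.
transitivity (\sum_(j < n.+1) G j).
  apply: sum_trunc; first by rewrite ltnS leq_addr.
  by move=> i hi _; rewrite /G /Tw (poch_negz _ _ _ hi) !mul0r mulr0.
transitivity (\sum_(m < n.+1) \sum_(j < m.+1) Xw n m * st R alpha (- k%:R) d m j).
  rewrite (tri_swap R (fun m j => Xw n m * st R alpha (- k%:R) d m j)).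
  apply: eq_bigr => -[j hj] _ /=.
  have := whip_j hb hc hd hab hac j (n - j).
  rewrite subnKC; last by rewrite -ltnS.
  move=> ->.
  by rewrite /G mulrC.
apply: eq_bigr => m _; rewrite -mulr_sumr saal.
congr (_ * (poch _ _ * poch _ _)); rewrite /alpha; ring.
Qed.

End Whip.


Lemma main4 (R : numFieldType) (k : nat) (a b c d : R)
  (hb : forall m : nat, b != - m%:R)
  (hc : forall m : nat, c != - m%:R)
  (hd : forall m : nat, d != - m%:R)
  (hab : forall m : nat, 1 + a - b != - m%:R)
  (hac : forall m : nat, 1 + a - c != - m%:R) :
  forall N : nat,
    fps_comp
      (hypcoef [:: a / 2%:R; 2%:R^-1 + a / 2%:R; 1 - k%:R + a - b - c; k%:R + d]
               [:: 1 + a - b; 1 + a - c; d])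
      (fun n => - 4%:R * fps_mul (@fps_X R) (binom_series (- 2%:R)) n) N
    = fps_mul (binom_series a)
        (fun n => hypcoef [:: a; b; c] [:: 1 + a - b; 1 + a - c] n * Q2 k n a b c d) N.
Proof.
move=> N.
pose T m := poch (1 - k%:R + a - b - c) m * poch (k%:R + d) m /
   ((m`!)%:R * (poch (1 + a - b) m * poch (1 + a - c) m * poch d m)).
rewrite /fps_comp /fps_mul.
transitivity (\sum_(m < N.+1) ((-1) ^+ m * poch a (2 * m) * T m *
   (poch (2 * m)%:R (N - m) / ((N - m)`!)%:R))).
  apply: eq_bigr => m _.
  have := powG R m N; rewrite /Gs => ->.
  rewrite -ltnS ltn_ord /hypcoef !big_cons !big_nil !mulr1 -(four R a m) exprNn /T.
  have hm := fact_neq0 R m.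
  have hg := @poch_neq0 R _ m hab.
  have hh := @poch_neq0 R _ m hac.
  have hdd := @poch_neq0 R _ m hd.
  field.
  by rewrite hm hg hh hdd fact_neq0.
symmetry.
rewrite (reindex_inj rev_ord_inj) /=.
pose F n m := binom_series a (N - n) * (poch a n / (n`!)%:R *
    (Xw R a b c d n m * (poch (1 - k%:R + a - b - c) m * poch (k%:R + d) m))).
transitivity (\sum_(n < N.+1) \sum_(m < n.+1) F n m).
  apply: eq_bigr => -[n hn] _ /=.
  rewrite subSS subKn; last by rewrite -ltnS.
  have hn0 := fact_neq0 R n.
  have hg := @poch_neq0 R _ n hab.
  have hh := @poch_neq0 R _ n hac.
  rewrite /F -!mulr_sumr -(whipple R a b c d k hb hc hd hab hac n) /Fw /hypcoef.
  rewrite !big_cons !big_nil !mulr1.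
  field.
  by rewrite hn0 hg hh.
rewrite (tri_swap R F).
apply: eq_bigr => -[m hm] _ /=.
set s := (N - m)%N.
have hm0 := fact_neq0 R m.
have hg := @poch_neq0 R _ m hab.
have hh := @poch_neq0 R _ m hac.
have hdd := @poch_neq0 R _ m hd.
transitivity (\sum_(l < s.+1) ((-1) ^+ m * poch a (2 * m) * T m) *
   (poch (a + (2 * m)%:R) l / (l`!)%:R * (poch (- a) (s - l) / ((s - l)`!)%:R))).
  apply: eq_bigr => l _.
  have hml := fact_neq0 R (m + l).
  have E1 : poch a (m + l) * poch ((m + l)%:R + a) m
      = poch a (2 * m) * poch (a + (2 * m)%:R) l.
    rewrite (addrC _ a) -pochD -pochD (_ : (m + l + m = 2 * m + l)%N) //; lia.
  transitivity ((poch a (m + l) * poch ((m + l)%:R + a) m) *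
     (poch (- (m + l)%:R) m / ((m + l)`!)%:R) * binom_series a (N - (m + l)) * T m).
    rewrite /F /Xw /T; field.
    by rewrite hml hm0 hg hh hdd.
  rewrite E1 negpoch /binom_series subnDA -/s.
  ring.
rewrite -mulr_sumr vander_n (_ : a + (2 * m)%:R + - a = (2 * m)%:R) //; ring.
Qed.

Theorem theorem4 (R : numClosedFieldType) (k : nat) (a b c d : R)
  (hb : forall m : nat, b != - m%:R)
  (hc : forall m : nat, c != - m%:R)
  (hd : forall m : nat, d != - m%:R)
  (hab : forall m : nat, 1 + a - b != - m%:R)
  (hac : forall m : nat, 1 + a - c != - m%:R) :
  forall N : nat,
    fps_comp
      (hypcoef [:: a / 2%:R; 2%:R^-1 + a / 2%:R; 1 - k%:R + a - b - c; k%:R + d]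
               [:: 1 + a - b; 1 + a - c; d])
      (fun n => - 4%:R * fps_mul (@fps_X R) (binom_series (- 2%:R)) n) N
    = fps_mul (binom_series a)
        (fun n => hypcoef [:: a; b; c] [:: 1 + a - b; 1 + a - c] n * Q2 k n a b c d) N.
Proof. exact: main4. Qed.
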